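(* Under Assumptions 1, 2, 4 and 5, the gradient descent iterates satisfy: (i) $\max_{1\le k\le L}\|W_k(t)\|_F$ is unbounded in $t$; (ii) $\sum_{t=0}^\infty\eta_t=\infty$; (iii) for every $R>0$, $\sum_{t:\,W(t)\in B(R)}\eta_t<\infty$.
   Context: Setting: data $(x_i,y_i)_{i=1}^n$ with $x_i\in\mathbb{R}^d$, $\|x_i\|\le 1$, $y_i\in\{-1,+1\}$; $z_i:=y_ix_i$; the data are linearly separable. A depth-$L$ linear network is $W=(W_L,\dots,W_1)$ with $W_k\in\mathbb{R}^{d_k\times d_{k-1}}$, $d_0=d$, $d_L=1$, $w_{\mathrm{prod}}:=(W_L\cdots W_1)^\top$, and $\mathcal{R}(W)=\frac1n\sum_{i=1}^n\ell(\langle w_{\mathrm{prod}},z_i\rangle)$. $B(R):=\{W:\max_k\|W_k\|_F\le R\}$. Gradient descent: $W(t+1)=W(t)-\eta_t\nabla\mathcal{R}(W(t))$, $t=0,1,2,\dots$. Assumption 1: $\ell$ is continuously differentiable, $\ell'<0$ everywhere, $\lim_{x\to-\infty}\ell(x)=\infty$, $\lim_{x\to\infty}\ell(x)=0$. Assumption 2: $\nabla\mathcal{R}(W(0))\ne0$ and $\mathcal{R}(W(0))\le\ell(0)$. Assumption 4: $\ell'$ is $\beta$-Lipschitz and $|\ell'|\le G$. Let $\beta(R):=2L^2R^{2L-2}(\beta+G)$. Assumption 5: $\eta_t=\min\{1/\beta(R_t),1\}$, where the radii $R_t$ satisfy $W(t)\in B(R_t-1)$ for every $t$, and $R_{t+1}=R_t$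 whenever $W(t+1)\in B(R_t-1)$. *)

(* Defs.v *)
From Stdlib Require Import Reals Lra Lia.
Open Scope R_scope.

Fixpoint sumR (n : nat) (f : nat -> R) : R :=
  match n with
  | O => 0
  | S m => sumR m f + f m
  end.

(* A depth-L linear network: W k i j = entry (i,j) of W_k (k = 1..L),
   W_k in R^{d k x d (k-1)}. Entries outside these ranges are irrelevant. *)
Definition Params := nat -> nat -> nat -> R.

Fixpoint prodMat (d : nat -> nat) (W : Params) (k : nat) : nat -> nat -> R :=
  match k with
  | O => fun i j => if Nat.eqb i j then 1 else 0
  | S m => fun i j => sumR (d m) (fun l => W (S m) i l * prodMat d W m l j)
  end.

(* w_prod = (W_L ... W_1)^T in R^{d 0} (d L = 1) *)
Definition wprod (d : nat -> nat) (L : nat) (W : Params) : nat -> R :=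
  fun j => prodMat d W L 0%nat j.

Definition inner (m : nat) (u v : nat -> R) : R := sumR m (fun j => u j * v j).

Definition risk (l : R -> R) (n : nat) (z : nat -> nat -> R)
  (d : nat -> nat) (L : nat) (W : Params) : R :=
  / INR n * sumR n (fun i => l (inner (d 0%nat) (wprod d L W) (z i))).

Definition frob (d : nat -> nat) (W : Params) (k : nat) : R :=
  sqrt (sumR (d k) (fun i => sumR (d (k - 1)%nat) (fun j => (W k i j) ^ 2))).

Fixpoint maxFrob (d : nat -> nat) (W : Params) (L : nat) : R :=
  match L with
  | O => 0
  | S O => frob d W 1%nat
  | S m => Rmax (maxFrob d W m) (frob d W (S m))
  end.

Definition inBall (d : nat -> nat) (L : nat) (Rad : R) (W : Params) : Prop :=
  maxFrob d W L <= Rad.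

Definition perturb (W : Params) (k i j : nat) (s : R) : Params :=
  fun k' i' j' =>
    if (Nat.eqb k' k && Nat.eqb i' i && Nat.eqb j' j)%bool
    then W k' i' j' + s else W k' i' j'.

Definition is_gradient (d : nat -> nat) (L : nat) (F : Params -> R)
  (G : Params -> Params) : Prop :=
  forall (W : Params) (k i j : nat),
    (1 <= k <= L)%nat -> (i < d k)%nat -> (j < d (k - 1))%nat ->
    derivable_pt_lim (fun s => F (perturb W k i j s)) 0 (G W k i j).

Definition betaR (L : nat) (beta Gb : R) (Rad : R) : R :=
  2 * (INR L) ^ 2 * Rad ^ (2 * L - 2) * (beta + Gb).

Definition stepsize (L : nat) (beta Gb : R) (Rad : nat -> R) (t : nat) : R :=
  Rmin (1 / betaR L beta Gb (Rad t)) 1.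

(* Main.v *)
Require Import Defs.
From Stdlib Require Import Reals Lra Lia Psatz FunctionalExtensionality Classical.
Open Scope R_scope.

Lemma sumR_ext n f g : (forall i, (i < n)%nat -> f i = g i) -> sumR n f = sumR n g.
Proof. induction n; simpl; intros H; auto. rewrite IHn by (intros; apply H; lia). rewrite H by lia; auto. Qed.

Lemma sumR_plus n f g : sumR n (fun i => f i + g i) = sumR n f + sumR n g.
Proof. induction n; simpl; [lra|rewrite IHn; lra]. Qed.

Lemma sumR_scal n c f : sumR n (fun i => c * f i) = c * sumR n f.
Proof. induction n; simpl; [lra|rewrite IHn; lra]. Qed.

Lemma sumR_scalr n c f : sumR n (fun i => f i * c) = sumR n f * c.
Proof. induction n; simpl; [lra|rewrite IHn; lra]. Qed.

Lemma sumR_opp n f : sumR n (fun i => - f i) = - sumR n f.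
Proof. induction n; simpl; [lra|rewrite IHn; lra]. Qed.

Lemma sumR_minus n f g : sumR n (fun i => f i - g i) = sumR n f - sumR n g.
Proof. induction n; simpl; [lra|rewrite IHn; lra]. Qed.

Lemma sumR_zero n f : (forall i, (i < n)%nat -> f i = 0) -> sumR n f = 0.
Proof. intros H. rewrite (sumR_ext n f (fun _ => 0)) by auto. induction n; simpl; auto; rewrite IHn; [lra|intros; auto]. Qed.

Lemma sumR_le n f g : (forall i, (i < n)%nat -> f i <= g i) -> sumR n f <= sumR n g.
Proof. induction n; simpl; intros H; [lra|]. assert (sumR n f <= sumR n g) by (apply IHn; intros; apply H; lia). specialize (H n ltac:(lia)). lra. Qed.

Lemma sumR_nonneg n f : (forall i, (i < n)%nat -> 0 <= f i) -> 0 <= sumR n f.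
Proof. intros H. replace 0 with (sumR n (fun _ => 0)). apply sumR_le; auto. apply sumR_zero; auto. Qed.

Lemma sumR_exchange n m F : sumR n (fun i => sumR m (fun j => F i j)) = sumR m (fun j => sumR n (fun i => F i j)).
Proof. induction n; simpl. symmetry; apply sumR_zero; auto. rewrite IHn. rewrite <- sumR_plus. auto. Qed.

Lemma sumR_delta n a f : (a < n)%nat -> sumR n (fun b => (if Nat.eqb b a then 1 else 0) * f b) = f a.
Proof.
  induction n; intros Ha; [lia|]. simpl. destruct (Nat.eq_dec a n).
  - subst. rewrite Nat.eqb_refl. rewrite sumR_zero. lra. intros i Hi. destruct (Nat.eqb_spec i n); [lia|lra].
  - rewrite IHn by lia. destruct (Nat.eqb_spec n a); [lia|lra].
Qed.

Lemma sumR_single n a f : (a < n)%nat -> (forall b, (b < n)%nat -> b <> a -> f b = 0) -> sumR n f = f a.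
Proof.
  intros Ha H. rewrite <- (sumR_delta n a f Ha). apply sumR_ext. intros b Hb.
  destruct (Nat.eqb_spec b a). subst; lra. rewrite H; auto; lra.
Qed.

Lemma sumR_abs n f : Rabs (sumR n f) <= sumR n (fun i => Rabs (f i)).
Proof. induction n; simpl. rewrite Rabs_R0; lra. eapply Rle_trans. apply Rabs_triang. lra. Qed.

Lemma sumR_derive n (F F' : nat -> R -> R) x :
  (forall i, (i < n)%nat -> derivable_pt_lim (F i) x (F' i x)) ->
  derivable_pt_lim (fun s => sumR n (fun i => F i s)) x (sumR n (fun i => F' i x)).
Proof.
  induction n; simpl; intros H.
  - apply (derivable_pt_lim_const 0 x).
  - apply (derivable_pt_lim_plus (fun s => sumR n (fun i => F i s)) (F n)). apply IHn; intros; apply H; lia. apply H; lia.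
Qed.

Lemma sumR_split_last n f : sumR (S n) f = sumR n f + f n.
Proof. reflexivity. Qed.

Lemma quad_disc a b c : 0 <= a -> (forall t, 0 <= a * t * t - 2 * b * t + c) -> b * b <= a * c.
Proof.
  intros Ha H. destruct (Rle_lt_or_eq_dec 0 a Ha) as [Hp|Hz].
  - specialize (H (b / a)). assert (a * (b/a) * (b/a) - 2 * b * (b/a) + c = c - b*b/a) by (field; lra).
    rewrite H0 in H. assert (b*b/a <= c) by lra. apply Rmult_le_reg_r with (/a). apply Rinv_0_lt_compat; auto.
    replace (b*b*/a) with (b*b/a) by reflexivity. replace (a*c*/a) with c by (field; lra). lra.
  - subst a. destruct (Req_dec b 0). rewrite H0; lra.
    specialize (H ((c+1)/(2*b))). replace (0 * ((c + 1) / (2 * b)) * ((c + 1) / (2 * b)) - 2 * b * ((c + 1) / (2 * b)) + c) with (-1) in H by (field; auto). lra.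
Qed.

Lemma sumR_CS n u v : (sumR n (fun i => u i * v i))^2 <= sumR n (fun i => (u i)^2) * sumR n (fun i => (v i)^2).
Proof.
  assert (H := quad_disc (sumR n (fun i => (v i)^2)) (sumR n (fun i => u i * v i)) (sumR n (fun i => (u i)^2))).
  cut (sumR n (fun i => u i * v i) * sumR n (fun i => u i * v i) <= sumR n (fun i => v i ^ 2) * sumR n (fun i => u i ^ 2)). intros; nra.
  apply H. apply sumR_nonneg; intros; apply pow2_ge_0.
  intros t. replace (sumR n (fun i => v i ^ 2) * t * t - 2 * sumR n (fun i => u i * v i) * t + sumR n (fun i => u i ^ 2)) with (sumR n (fun i => (u i - t * v i)^2)).
  apply sumR_nonneg; intros; apply pow2_ge_0.
  rewrite <- !sumR_scalr, <- sumR_scal, <- sumR_scalr, <- sumR_minus, <- sumR_plus. apply sumR_ext; intros; ring.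
Qed.

Lemma sqrt_sq_le a b : 0 <= b -> a^2 <= b^2 -> Rabs a <= b.
Proof. intros Hb H. apply Rsqr_le_abs_1 in H || idtac. rewrite <- (Rabs_pos_eq b Hb). apply Rsqr_le_abs_0. unfold Rsqr; nra. Qed.

Definition nrm n (u : nat -> R) := sqrt (sumR n (fun i => (u i)^2)).

Lemma nrm_nonneg n u : 0 <= nrm n u.
Proof. apply sqrt_pos. Qed.

Lemma nrm_sq n u : (nrm n u)^2 = sumR n (fun i => (u i)^2).
Proof. unfold nrm. rewrite pow2_sqrt; auto. apply sumR_nonneg; intros; nra. Qed.

Lemma sumR_CS_abs n u v : Rabs (sumR n (fun i => u i * v i)) <= nrm n u * nrm n v.
Proof. apply sqrt_sq_le. apply Rmult_le_pos; apply nrm_nonneg. rewrite Rpow_mult_distr, !nrm_sq. apply sumR_CS. Qed.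

Lemma nrm_triang n u v : nrm n (fun i => u i + v i) <= nrm n u + nrm n v.
Proof.
  assert (H1 := nrm_nonneg n u). assert (H2 := nrm_nonneg n v). assert (H3 := nrm_nonneg n (fun i => u i + v i)).
  apply sqrt_sq_le in H3 || idtac.
  rewrite <- (Rabs_pos_eq (nrm n (fun i => u i + v i))) by auto. apply sqrt_sq_le. lra.
  rewrite nrm_sq. replace (sumR n (fun i => (u i + v i)^2)) with (sumR n (fun i => (u i)^2) + 2 * sumR n (fun i => u i * v i) + sumR n (fun i => (v i)^2)).
  rewrite <- !nrm_sq. assert (H := sumR_CS_abs n u v). assert (sumR n (fun i => u i * v i) <= nrm n u * nrm n v) by (eapply Rle_trans; [apply Rle_abs|auto]). nra.
  rewrite <- sumR_scal, <- !sumR_plus. apply sumR_ext; intros; ring.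
Qed.
Definition padd (W D : Params) (s : R) : Params := fun k i j => W k i j + s * D k i j.
Definition ebasis (k a b : nat) : Params := fun k' i' j' =>
  if (Nat.eqb k' k && Nat.eqb i' a && Nat.eqb j' b)%bool then 1 else 0.

Lemma perturb_padd W k a b s : perturb W k a b s = padd W (ebasis k a b) s.
Proof. extensionality k'; extensionality i'; extensionality j'. unfold perturb, padd, ebasis.
  destruct (Nat.eqb k' k && Nat.eqb i' a && Nat.eqb j' b)%bool; ring. Qed.

Lemma padd0 W D : padd W D 0 = W.
Proof. extensionality k'; extensionality i'; extensionality j'. unfold padd; ring. Qed.

Section Net.
Variable d : nat -> nat.

Fixpoint V (W : Params) (v : nat -> R) (m : nat) : nat -> R :=
  match m with
  | O => v
  | S m' => fun i => sumR (d m') (fun l => W (S m') i l * V W v m' l)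
  end.

Fixpoint VD (W D : Params) (v : nat -> R) (m : nat) : nat -> R :=
  match m with
  | O => fun _ => 0
  | S m' => fun i => sumR (d m') (fun l => D (S m') i l * V W v m' l + W (S m') i l * VD W D v m' l)
  end.

Fixpoint VDD (W D : Params) (v : nat -> R) (m : nat) : nat -> R :=
  match m with
  | O => fun _ => 0
  | S m' => fun i => sumR (d m') (fun l => 2 * D (S m') i l * VD W D v m' l + W (S m') i l * VDD W D v m' l)
  end.

Lemma prod_V W v m i : (i < d m)%nat -> sumR (d 0%nat) (fun j => prodMat d W m i j * v j) = V W v m i.
Proof.
  revert i. induction m; intros i Hi; simpl.
  - rewrite <- (sumR_delta (d 0%nat) i v Hi). apply sumR_ext; intros j _. rewrite Nat.eqb_sym. reflexivity.
  - transitivity (sumR (d 0%nat) (fun j => sumR (d m) (fun l => W (S m) i l * prodMat d W m l j * v j))).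
    apply sumR_ext; intros j _. rewrite <- sumR_scalr. apply sumR_ext; intros; ring.
    rewrite sumR_exchange. apply sumR_ext; intros l Hl. rewrite <- IHm by auto. rewrite <- sumR_scal. apply sumR_ext; intros; ring.
Qed.

Lemma deriv_eq f x l1 l2 : derivable_pt_lim f x l1 -> l1 = l2 -> derivable_pt_lim f x l2.
Proof. intros H ->; auto. Qed.

Lemma deriv_mul f g f' g' x : derivable_pt_lim f x f' -> derivable_pt_lim g x g' ->
  derivable_pt_lim (fun s => f s * g s) x (f' * g x + f x * g').
Proof. intros. apply (derivable_pt_lim_mult f g); auto. Qed.

Lemma deriv_plus f g f' g' x : derivable_pt_lim f x f' -> derivable_pt_lim g x g' ->
  derivable_pt_lim (fun s => f s + g s) x (f' + g').
Proof. intros. apply (derivable_pt_lim_plus f g); auto. Qed.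

Lemma deriv_cst a x : derivable_pt_lim (fun _ => a) x 0.
Proof. apply (derivable_pt_lim_const a x). Qed.

Lemma deriv_id x : derivable_pt_lim (fun s => s) x 1.
Proof. apply (derivable_pt_lim_id x). Qed.

Lemma deriv_lin a b x : derivable_pt_lim (fun s => a + s * b) x b.
Proof.
  apply deriv_eq with (0 + (1 * b + x * 0)). apply deriv_plus. apply deriv_cst.
  apply (deriv_mul (fun s => s) (fun _ => b)). apply deriv_id. apply deriv_cst. ring.
Qed.

Lemma dV W D v m i s : derivable_pt_lim (fun s => V (padd W D s) v m i) s (VD (padd W D s) D v m i).
Proof.
  revert i. induction m; intros i; simpl.
  - apply (derivable_pt_lim_const (v i) s).
  - apply sumR_derive with (F := fun l s => padd W D s (S m) i l * V (padd W D s) v m l)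
      (F' := fun l s => D (S m) i l * V (padd W D s) v m l + padd W D s (S m) i l * VD (padd W D s) D v m l).
    intros l _. apply deriv_mul. apply deriv_lin. apply IHm.
Qed.

Lemma dVD W D v m i s : derivable_pt_lim (fun s => VD (padd W D s) D v m i) s (VDD (padd W D s) D v m i).
Proof.
  revert i. induction m; intros i; simpl.
  - apply (derivable_pt_lim_const 0 s).
  - apply sumR_derive with (F := fun l s => D (S m) i l * V (padd W D s) v m l + padd W D s (S m) i l * VD (padd W D s) D v m l)
      (F' := fun l s => 2 * D (S m) i l * VD (padd W D s) D v m l + padd W D s (S m) i l * VDD (padd W D s) D v m l).
    intros l _. apply deriv_eq with (D (S m) i l * VD (padd W D s) D v m l + (D (S m) i l * VD (padd W D s) D v m l + padd W D s (S m) i l * VDD (padd W D s) D v m l)); [|ring].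
    apply (derivable_pt_lim_plus (fun s => D (S m) i l * V (padd W D s) v m l)).
    apply deriv_eq with (0 * V (padd W D s) v m l + D (S m) i l * VD (padd W D s) D v m l); [|ring].
    apply deriv_mul. apply derivable_pt_lim_const. apply dV.
    apply deriv_mul. apply deriv_lin. apply IHm.
Qed.

Definition coordSum (m : nat) (F : nat -> nat -> nat -> R) : R :=
  sumR m (fun k => sumR (d (S k)) (fun a => sumR (d k) (fun b => F (S k) a b))).

Lemma coordSum_ext m F G : (forall k a b, (1 <= k <= m)%nat -> (a < d k)%nat -> (b < d (k-1))%nat -> F k a b = G k a b) ->
  coordSum m F = coordSum m G.
Proof. intros H. unfold coordSum. apply sumR_ext; intros k Hk. apply sumR_ext; intros a Ha. apply sumR_ext; intros b Hb.
  apply H; auto; try lia. simpl. rewrite Nat.sub_0_r. auto. Qed.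

Lemma coordSum_plus m F G : coordSum m (fun k a b => F k a b + G k a b) = coordSum m F + coordSum m G.
Proof. unfold coordSum. rewrite <- sumR_plus. apply sumR_ext; intros. rewrite <- sumR_plus. apply sumR_ext; intros. apply sumR_plus. Qed.

Lemma coordSum_scal m c F : coordSum m (fun k a b => c * F k a b) = c * coordSum m F.
Proof. unfold coordSum. rewrite <- sumR_scal. apply sumR_ext; intros. rewrite <- sumR_scal. apply sumR_ext; intros. apply sumR_scal. Qed.

Lemma coordSum_sum m p F : coordSum m (fun k a b => sumR p (fun l => F k a b l)) = sumR p (fun l => coordSum m (fun k a b => F k a b l)).
Proof. unfold coordSum. rewrite (sumR_exchange p m). apply sumR_ext; intros k _.
  rewrite (sumR_exchange p (d (S k))). apply sumR_ext; intros a _. rewrite (sumR_exchange p (d k)). reflexivity. Qed.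

Lemma coordSum_nonneg m F : (forall k a b, 0 <= F k a b) -> 0 <= coordSum m F.
Proof. intros H. unfold coordSum. repeat (apply sumR_nonneg; intros). auto. Qed.

Lemma coordSum_le m F G : (forall k a b, F k a b <= G k a b) -> coordSum m F <= coordSum m G.
Proof. intros H. unfold coordSum. repeat (apply sumR_le; intros). auto. Qed.

Lemma VD_zero W D v m i : (forall k a b, (1 <= k <= m)%nat -> D k a b = 0) -> VD W D v m i = 0.
Proof. revert i; induction m; intros i H; simpl; auto. apply sumR_zero; intros l _. rewrite H by lia. rewrite IHm. ring. intros; apply H; lia. Qed.

Lemma VD_lin W D v m r : (r < d m)%nat -> VD W D v m r = coordSum m (fun k a b => D k a b * VD W (ebasis k a b) v m r).
Proof.
  revert r. induction m; intros r Hr.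
  - reflexivity.
  - unfold coordSum. rewrite sumR_split_last. fold (coordSum m (fun k a b => D k a b * VD W (ebasis k a b) v (S m) r)).
    transitivity (sumR (d m) (fun l => W (S m) r l * VD W D v m l) + sumR (d m) (fun l => D (S m) r l * V W v m l)).
    { simpl. rewrite <- sumR_plus. apply sumR_ext; intros; ring. }
    f_equal.
    + transitivity (sumR (d m) (fun l => W (S m) r l * coordSum m (fun k a b => D k a b * VD W (ebasis k a b) v m l))).
      apply sumR_ext; intros l Hl. rewrite IHm; auto.
      transitivity (coordSum m (fun k a b => sumR (d m) (fun l => W (S m) r l * (D k a b * VD W (ebasis k a b) v m l)))).
      rewrite coordSum_sum. apply sumR_ext; intros l _. rewrite <- coordSum_scal. reflexivity.
      apply coordSum_ext. intros k a b Hk Ha Hb. simpl. rewrite <- sumR_scal. apply sumR_ext; intros l _.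
      replace (ebasis k a b (S m) r l) with 0 by (unfold ebasis; destruct (Nat.eqb_spec (S m) k); [lia|reflexivity]). ring.
    + symmetry. rewrite (sumR_single (d (S m)) r); auto.
      apply sumR_ext; intros b Hb. simpl.
      rewrite (sumR_single (d m) b); auto.
      * unfold ebasis. rewrite !Nat.eqb_refl. simpl. rewrite VD_zero. ring. intros k a c Hk. unfold ebasis. destruct (Nat.eqb_spec k (S m)); [lia|]. reflexivity.
      * intros c Hc Hcb. unfold ebasis. rewrite Nat.eqb_refl, Nat.eqb_refl. destruct (Nat.eqb_spec c b); [lia|]. simpl. rewrite VD_zero. ring.
        intros k a e Hk. destruct (Nat.eqb_spec k (S m)); [lia|]. reflexivity.
      * intros a Ha Har. apply sumR_zero; intros b Hb. simpl. rewrite sumR_zero. ring. intros c Hc.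
        unfold ebasis. rewrite Nat.eqb_refl. destruct (Nat.eqb_spec r a); [lia|]. simpl. rewrite VD_zero. ring.
        intros k a' e Hk. destruct (Nat.eqb_spec k (S m)); [lia|]. reflexivity.
Qed.

End Net.
Lemma sq_le a b : 0 <= a -> 0 <= b -> a^2 <= b^2 -> a <= b.
Proof. intros. rewrite <- (Rabs_pos_eq a) by auto; apply sqrt_sq_le; auto. Qed.

Lemma sumR_ge_term n f i : (forall j, (j < n)%nat -> 0 <= f j) -> (i < n)%nat -> f i <= sumR n f.
Proof.
  induction n; intros H Hi; [lia|]. simpl. destruct (Nat.eq_dec i n).
  - subst. assert (0 <= sumR n f) by (apply sumR_nonneg; intros; apply H; lia). lra.
  - assert (f i <= sumR n f) by (apply IHn; [intros; apply H; lia|lia]). specialize (H n ltac:(lia)). lra.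
Qed.

Lemma nrm_ext n u v : (forall i, (i < n)%nat -> u i = v i) -> nrm n u = nrm n v.
Proof. intros H. unfold nrm. f_equal. apply sumR_ext; intros; rewrite H; auto. Qed.

Lemma nrm_entry n u i : (i < n)%nat -> Rabs (u i) <= nrm n u.
Proof. intros Hi. apply sqrt_sq_le. apply nrm_nonneg. rewrite nrm_sq. apply (sumR_ge_term n (fun j => (u j)^2)); auto. intros; apply pow2_ge_0. Qed.

Lemma nrm_scal n c u : nrm n (fun i => c * u i) = Rabs c * nrm n u.
Proof.
  unfold nrm. rewrite <- sqrt_Rsqr_abs. rewrite <- sqrt_mult_alt. f_equal. unfold Rsqr. rewrite <- sumR_scal. apply sumR_ext; intros; ring.
  apply Rle_0_sqr.
Qed.

Definition dsum n m (F : nat -> nat -> R) := sumR n (fun a => sumR m (fun b => F a b)).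

Lemma dsum_plus n m F G : dsum n m (fun a b => F a b + G a b) = dsum n m F + dsum n m G.
Proof. unfold dsum. rewrite <- sumR_plus. apply sumR_ext; intros. apply sumR_plus. Qed.
Lemma dsum_scal n m c F : dsum n m (fun a b => c * F a b) = c * dsum n m F.
Proof. unfold dsum. rewrite <- sumR_scal. apply sumR_ext; intros. apply sumR_scal. Qed.
Lemma dsum_nonneg n m F : (forall a b, 0 <= F a b) -> 0 <= dsum n m F.
Proof. intros; unfold dsum; repeat (apply sumR_nonneg; intros); auto. Qed.

Lemma dsum_CS n m u v : (dsum n m (fun a b => u a b * v a b))^2 <= dsum n m (fun a b => (u a b)^2) * dsum n m (fun a b => (v a b)^2).
Proof.
  cut (dsum n m (fun a b => u a b * v a b) * dsum n m (fun a b => u a b * v a b) <= dsum n m (fun a b => v a b ^ 2) * dsum n m (fun a b => u a b ^ 2)). intros; nra.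
  apply quad_disc. apply dsum_nonneg; intros; apply pow2_ge_0.
  intros t. replace (dsum n m (fun a b => v a b ^ 2) * t * t - 2 * dsum n m (fun a b => u a b * v a b) * t + dsum n m (fun a b => u a b ^ 2)) with (dsum n m (fun a b => (u a b - t * v a b)^2)).
  apply dsum_nonneg; intros; apply pow2_ge_0.
  transitivity (dsum n m (fun a b => (t*t) * (v a b)^2) + dsum n m (fun a b => (-2*t) * (u a b * v a b)) + dsum n m (fun a b => (u a b)^2)).
  rewrite <- !dsum_plus. unfold dsum. apply sumR_ext; intros; apply sumR_ext; intros; ring.
  rewrite !dsum_scal. ring.
Qed.

Definition dnrm n m F := sqrt (dsum n m (fun a b => (F a b)^2)).

Lemma dnrm_sq n m F : (dnrm n m F)^2 = dsum n m (fun a b => (F a b)^2).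
Proof. unfold dnrm. rewrite pow2_sqrt; auto. apply dsum_nonneg; intros; apply pow2_ge_0. Qed.
Lemma dnrm_nonneg n m F : 0 <= dnrm n m F.
Proof. apply sqrt_pos. Qed.

Lemma dnrm_triang n m u v : dnrm n m (fun a b => u a b + v a b) <= dnrm n m u + dnrm n m v.
Proof.
  assert (H1 := dnrm_nonneg n m u). assert (H2 := dnrm_nonneg n m v). assert (H3 := dnrm_nonneg n m (fun a b => u a b + v a b)).
  rewrite <- (Rabs_pos_eq (dnrm n m (fun a b => u a b + v a b))) by auto. apply sqrt_sq_le. lra.
  rewrite dnrm_sq. replace (dsum n m (fun a b => (u a b + v a b)^2)) with (dsum n m (fun a b => (u a b)^2) + 2 * dsum n m (fun a b => u a b * v a b) + dsum n m (fun a b => (v a b)^2)).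
  rewrite <- !dnrm_sq. assert (H := dsum_CS n m u v). rewrite <- !dnrm_sq in H.
  assert (Habs : Rabs (dsum n m (fun a b => u a b * v a b)) <= dnrm n m u * dnrm n m v).
  { apply sqrt_sq_le. nra. rewrite Rpow_mult_distr. auto. }
  assert (dsum n m (fun a b => u a b * v a b) <= dnrm n m u * dnrm n m v) by (eapply Rle_trans; [apply Rle_abs|auto]). nra.
  rewrite <- dsum_scal, <- !dsum_plus. unfold dsum. apply sumR_ext; intros. apply sumR_ext; intros. ring.
Qed.

Lemma dnrm_scal n m c F : dnrm n m (fun a b => c * F a b) = Rabs c * dnrm n m F.
Proof.
  unfold dnrm. rewrite <- sqrt_Rsqr_abs. rewrite <- sqrt_mult_alt. f_equal. unfold Rsqr. rewrite <- dsum_scal. unfold dsum. apply sumR_ext; intros; apply sumR_ext; intros; ring.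
  apply Rle_0_sqr.
Qed.

Lemma frob_dnrm d W k : frob d W k = dnrm (d k) (d (k-1)%nat) (W k).
Proof. reflexivity. Qed.

Lemma matvec n m (B : nat -> nat -> R) u :
  nrm n (fun i => sumR m (fun l => B i l * u l)) <= dnrm n m B * nrm m u.
Proof.
  apply sq_le. apply nrm_nonneg. apply Rmult_le_pos; [apply dnrm_nonneg|apply nrm_nonneg].
  rewrite Rpow_mult_distr, nrm_sq, dnrm_sq, nrm_sq. unfold dsum. rewrite <- sumR_scalr.
  apply sumR_le; intros i _. apply sumR_CS.
Qed.
Lemma frob_S d W m : frob d W (S m) = dnrm (d (S m)) (d m) (W (S m)).
Proof. unfold frob, dnrm, dsum. replace (S m - 1)%nat with m by lia. reflexivity. Qed.

Lemma V_bounds d W D v R del Lm :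
  1 <= R -> 0 <= del ->
  (forall k, (1 <= k <= Lm)%nat -> frob d W k <= R) ->
  (forall k, (1 <= k <= Lm)%nat -> frob d D k <= del) ->
  forall m, (m <= Lm)%nat ->
  nrm (d m) (V d W v m) <= R^m * nrm (d 0%nat) v /\
  R * nrm (d m) (VD d W D v m) <= INR m * R^m * del * nrm (d 0%nat) v /\
  R^2 * nrm (d m) (VDD d W D v m) <= (INR m)^2 * R^m * del^2 * nrm (d 0%nat) v.
Proof.
  intros HR Hdel HW HD. assert (Hnv := nrm_nonneg (d 0%nat) v).
  assert (Hz : forall n, nrm n (fun _ => 0) = 0).
  { intros n0. unfold nrm. rewrite sumR_zero. apply sqrt_0. intros; ring. }
  induction m; intros Hm.
  - simpl. rewrite !Hz. repeat split; lra.
  - destruct (IHm ltac:(lia)) as [H1 [H2 H3]].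
    assert (HWk : dnrm (d (S m)) (d m) (W (S m)) <= R) by (rewrite <- frob_S; apply HW; lia).
    assert (HDk : dnrm (d (S m)) (d m) (D (S m)) <= del) by (rewrite <- frob_S; apply HD; lia).
    assert (N1 := nrm_nonneg (d m) (V d W v m)). assert (N2 := nrm_nonneg (d m) (VD d W D v m)).
    assert (N3 := nrm_nonneg (d m) (VDD d W D v m)).
    assert (HRm : 1 <= R^m) by (apply pow_R1_Rle; auto).
    rewrite S_INR. simpl (R ^ S m). split; [|split].
    + simpl V. eapply Rle_trans. apply matvec. assert (0 <= dnrm (d (S m)) (d m) (W (S m))) by apply dnrm_nonneg. nra.
    + simpl VD. rewrite (nrm_ext _ _ (fun i => sumR (d m) (fun l => D (S m) i l * V d W v m l) + sumR (d m) (fun l => W (S m) i l * VD d W D v m l))) by (intros; apply sumR_plus).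
      eapply Rle_trans. apply Rmult_le_compat_l. lra. apply nrm_triang.
      assert (A1 := matvec (d (S m)) (d m) (D (S m)) (V d W v m)).
      assert (A2 := matvec (d (S m)) (d m) (W (S m)) (VD d W D v m)).
      assert (0 <= dnrm (d (S m)) (d m) (D (S m))) by apply dnrm_nonneg.
      assert (0 <= dnrm (d (S m)) (d m) (W (S m))) by apply dnrm_nonneg.
      assert (0 <= INR m) by apply pos_INR.
      assert (B1 : nrm (d (S m)) (fun i => sumR (d m) (fun l => D (S m) i l * V d W v m l)) <= del * (R^m * nrm (d 0%nat) v)) by (eapply Rle_trans; [apply A1|]; apply Rmult_le_compat; auto).
      assert (B2 : R * nrm (d (S m)) (fun i => sumR (d m) (fun l => W (S m) i l * VD d W D v m l)) <= R * (INR m * R ^ m * del * nrm (d 0%nat) v)).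
      { eapply Rle_trans. apply Rmult_le_compat_l. lra. apply A2. 
        replace (R * (dnrm (d (S m)) (d m) (W (S m)) * nrm (d m) (VD d W D v m))) with (dnrm (d (S m)) (d m) (W (S m)) * (R * nrm (d m) (VD d W D v m))) by ring.
        apply Rmult_le_compat; try lra. apply Rmult_le_pos; lra. }
      assert (B3 : R * nrm (d (S m)) (fun i => sumR (d m) (fun l => D (S m) i l * V d W v m l)) <= R * (del * (R^m * nrm (d 0%nat) v))) by (apply Rmult_le_compat_l; lra).
      rewrite Rmult_plus_distr_l. eapply Rle_trans. apply Rplus_le_compat. apply B3. apply B2. right; ring.
    + simpl VDD. rewrite (nrm_ext _ _ (fun i => 2 * sumR (d m) (fun l => D (S m) i l * VD d W D v m l) + sumR (d m) (fun l => W (S m) i l * VDD d W D v m l))).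
      2:{ intros. rewrite <- sumR_scal, <- sumR_plus. apply sumR_ext; intros; ring. }
      eapply Rle_trans. apply Rmult_le_compat_l. nra. apply nrm_triang.
      rewrite nrm_scal, Rabs_pos_eq by lra.
      assert (A1 := matvec (d (S m)) (d m) (D (S m)) (VD d W D v m)).
      assert (A2 := matvec (d (S m)) (d m) (W (S m)) (VDD d W D v m)).
      assert (0 <= dnrm (d (S m)) (d m) (D (S m))) by apply dnrm_nonneg.
      assert (0 <= dnrm (d (S m)) (d m) (W (S m))) by apply dnrm_nonneg.
      assert (0 <= INR m) by apply pos_INR.
      assert (B1 : R * nrm (d (S m)) (fun i => sumR (d m) (fun l => D (S m) i l * VD d W D v m l)) <= del * (INR m * R ^ m * del * nrm (d 0%nat) v)).
      { eapply Rle_trans. apply Rmult_le_compat_l. lra. apply A1.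
        replace (R * (dnrm (d (S m)) (d m) (D (S m)) * nrm (d m) (VD d W D v m))) with (dnrm (d (S m)) (d m) (D (S m)) * (R * nrm (d m) (VD d W D v m))) by ring.
        apply Rmult_le_compat; try lra. apply Rmult_le_pos; lra. }
      assert (B2 : R^2 * nrm (d (S m)) (fun i => sumR (d m) (fun l => W (S m) i l * VDD d W D v m l)) <= R * ((INR m)^2 * R ^ m * del^2 * nrm (d 0%nat) v)).
      { eapply Rle_trans. apply Rmult_le_compat_l. nra. apply A2.
        replace (R^2 * (dnrm (d (S m)) (d m) (W (S m)) * nrm (d m) (VDD d W D v m))) with (dnrm (d (S m)) (d m) (W (S m)) * (R^2 * nrm (d m) (VDD d W D v m))) by ring.
        apply Rmult_le_compat; try lra. apply Rmult_le_pos; nra. }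
      assert (B3 : R^2 * (2 * nrm (d (S m)) (fun i => sumR (d m) (fun l => D (S m) i l * VD d W D v m l))) <= 2 * R * (del * (INR m * R ^ m * del * nrm (d 0%nat) v))).
      { replace (R^2 * (2 * nrm (d (S m)) (fun i => sumR (d m) (fun l => D (S m) i l * VD d W D v m l)))) with (2 * R * (R * nrm (d (S m)) (fun i => sumR (d m) (fun l => D (S m) i l * VD d W D v m l)))) by ring.
        apply Rmult_le_compat_l; lra. }
      assert (0 <= R * R^m * del^2 * nrm (d 0%nat) v) by (apply Rmult_le_pos; [apply Rmult_le_pos; [apply Rmult_le_pos|]|]; try apply pow2_ge_0; lra).
      rewrite Rmult_plus_distr_l. eapply Rle_trans. apply Rplus_le_compat. apply B3. apply B2.
      replace (2 * R * (del * (INR m * R ^ m * del * nrm (d 0%nat) v)) + R * (INR m ^ 2 * R ^ m * del ^ 2 * nrm (d 0%nat) v)) with ((2 * INR m + INR m ^ 2) * (R * R^m * del^2 * nrm (d 0%nat) v)) by ring.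
      replace ((INR m + 1) ^ 2 * (R * R ^ m) * del ^ 2 * nrm (d 0%nat) v) with ((INR m + 1)^2 * (R * R^m * del^2 * nrm (d 0%nat) v)) by ring.
      apply Rmult_le_compat_r; auto. nra.
Qed.
Lemma avg_bound n f M : 0 <= M -> (forall i, (i < n)%nat -> Rabs (f i) <= M) -> Rabs (/ INR n * sumR n f) <= M.
Proof.
  intros HM H. destruct n. simpl. rewrite Rmult_0_r, Rabs_R0. auto.
  assert (HnP : 0 < INR (S n)) by (apply lt_0_INR; lia).
  rewrite Rabs_mult, Rabs_pos_eq by (left; apply Rinv_0_lt_compat; auto).
  apply Rmult_le_reg_l with (INR (S n)); auto. rewrite <- Rmult_assoc, Rinv_r by lra. rewrite Rmult_1_l.
  eapply Rle_trans. apply sumR_abs. eapply Rle_trans. apply (sumR_le _ _ (fun _ => M)). auto.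
  clear. generalize (S n). intros m; induction m. simpl; lra. rewrite S_INR. simpl. lra.
Qed.

Lemma maxFrob_props d W : forall m, (1 <= m)%nat ->
  (forall k, (1 <= k <= m)%nat -> frob d W k <= maxFrob d W m) /\
  (forall X, (forall k, (1 <= k <= m)%nat -> frob d W k <= X) -> maxFrob d W m <= X).
Proof.
  induction m; intros Hm; [lia|]. destruct m.
  - simpl. split. intros k Hk. replace k with 1%nat by lia. lra. intros X H. apply H; lia.
  - destruct (IHm ltac:(lia)) as [I1 I2]. change (maxFrob d W (S (S m))) with (Rmax (maxFrob d W (S m)) (frob d W (S (S m)))).
    split.
    + intros k Hk. destruct (Nat.eq_dec k (S (S m))). subst. apply Rmax_r. eapply Rle_trans. apply I1. lia. apply Rmax_l.
    + intros X H. apply Rmax_lub. apply I2. intros; apply H; lia. apply H; lia.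
Qed.

Lemma frob_nonneg d W k : 0 <= frob d W k.
Proof. apply sqrt_pos. Qed.

Lemma betaR_R2 L beta Gb R : (1 <= L)%nat -> betaR L beta Gb R * R^2 = 2 * INR L ^ 2 * R^(2*L) * (beta + Gb).
Proof. intros HL. unfold betaR. replace (2 * L)%nat with ((2*L - 2) + 2)%nat at 2 by lia. rewrite pow_add. ring. Qed.

Section Main.
Variables (n : nat) (d : nat -> nat) (L : nat) (x : nat -> nat -> R) (y : nat -> R).
Hypothesis (Hy : forall i, (i < n)%nat -> y i = 1 \/ y i = -1).
Hypothesis (Hx : forall i, (i < n)%nat -> sqrt (sumR (d 0%nat) (fun j => (x i j) ^ 2)) <= 1).
Hypothesis (Hsep : exists u : nat -> R, forall i, (i < n)%nat -> 0 < inner (d 0%nat) u (fun j => y i * x i j)).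
Hypothesis (HL : (1 <= L)%nat).
Hypothesis (HdL : d L = 1%nat).
Variables (l l' : R -> R) (beta Gb : R).
Hypothesis (Hl_der : forall s, derivable_pt_lim l s (l' s)).
Hypothesis (Hl'_cont : continuity l').
Hypothesis (Hl'_neg : forall s, l' s < 0).
Hypothesis (Hl_minf : forall M, exists A, forall s, s <= A -> M <= l s).
Hypothesis (Hl_pinf : forall eps, 0 < eps -> exists A, forall s, A <= s -> Rabs (l s) < eps).
Hypothesis (Hlip : forall s r, Rabs (l' s - l' r) <= beta * Rabs (s - r)).
Hypothesis (Hbnd : forall s, Rabs (l' s) <= Gb).
Variable (G : Params -> Params).
Hypothesis (HG : is_gradient d L (risk l n (fun i j => y i * x i j) d L) G).

Definition zz := fun i j => y i * x i j.
Definition AA (W : Params) i := V d W (zz i) L 0%nat.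

Lemma zz_nrm i : (i < n)%nat -> nrm (d 0%nat) (zz i) <= 1.
Proof.
  intros Hi. eapply Rle_trans; [|apply (Hx i Hi)]. right. unfold nrm. f_equal. apply sumR_ext; intros j _. unfold zz.
  destruct (Hy i Hi) as [-> | ->]; ring.
Qed.

Lemma risk_eq W : risk l n zz d L W = / INR n * sumR n (fun i => l (AA W i)).
Proof. unfold risk, inner, wprod, AA. f_equal. apply sumR_ext; intros i _. f_equal. apply prod_V. rewrite HdL; lia. Qed.

Lemma dphi W D s : derivable_pt_lim (fun s => risk l n zz d L (padd W D s)) s
  (/ INR n * sumR n (fun i => l' (AA (padd W D s) i) * VD d (padd W D s) D (zz i) L 0%nat)).
Proof.
  replace (fun s => risk l n zz d L (padd W D s)) with (fun s => / INR n * sumR n (fun i => l (AA (padd W D s) i))) by (extensionality s'; rewrite risk_eq; auto).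
  apply deriv_eq with (0 * sumR n (fun i => l (AA (padd W D s) i)) + / INR n * sumR n (fun i => l' (AA (padd W D s) i) * VD d (padd W D s) D (zz i) L 0%nat)); [|ring].
  apply (deriv_mul (fun _ => / INR n)). apply deriv_cst.
  apply sumR_derive with (F := fun i s => l (AA (padd W D s) i)) (F' := fun i s => l' (AA (padd W D s) i) * VD d (padd W D s) D (zz i) L 0%nat).
  intros i _. apply deriv_eq with (l' (AA (padd W D s) i) * VD d (padd W D s) D (zz i) L 0%nat); [|ring].
  assert (H := derivable_pt_lim_comp (fun s => AA (padd W D s) i) l s _ _ (dV d W D (zz i) L 0%nat s) (Hl_der _)).
  unfold comp in H. exact H.
Qed.

Lemma G_eq W k a b : (1 <= k <= L)%nat -> (a < d k)%nat -> (b < d (k-1))%nat ->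
  G W k a b = / INR n * sumR n (fun i => l' (AA W i) * VD d W (ebasis k a b) (zz i) L 0%nat).
Proof.
  intros Hk Ha Hb. assert (H1 := HG W k a b Hk Ha Hb).
  assert (H2 := dphi W (ebasis k a b) 0). rewrite padd0 in H2.
  eapply uniqueness_limite; [exact H1|]. 
  replace (fun s => risk l n (fun i j => y i * x i j) d L (perturb W k a b s)) with (fun s => risk l n zz d L (padd W (ebasis k a b) s)).
  exact H2. extensionality s. rewrite perturb_padd. reflexivity.
Qed.

Lemma dirder W D : / INR n * sumR n (fun i => l' (AA W i) * VD d W D (zz i) L 0%nat) = coordSum d L (fun k a b => D k a b * G W k a b).
Proof.
  transitivity (/ INR n * sumR n (fun i => coordSum d L (fun k a b => l' (AA W i) * (D k a b * VD d W (ebasis k a b) (zz i) L 0%nat)))).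
  { f_equal. apply sumR_ext; intros i _. rewrite coordSum_scal. f_equal. apply VD_lin. rewrite HdL; lia. }
  rewrite <- coordSum_sum, <- coordSum_scal. apply coordSum_ext. intros k a b Hk Ha Hb. rewrite G_eq by auto.
  rewrite <- !sumR_scal. apply sumR_ext; intros; ring.
Qed.

Lemma beta_nonneg : 0 <= beta.
Proof. assert (H := Hlip 1 0). assert (0 <= Rabs (l' 1 - l' 0)) by apply Rabs_pos. rewrite Rminus_0_r, Rabs_R1 in H. lra. Qed.

Lemma Gb_pos : 0 < Gb.
Proof. assert (H := Hbnd 0). assert (H2 := Hl'_neg 0). rewrite Rabs_left in H by auto. lra. Qed.

Definition gsq Wp := coordSum d L (fun k a b => (G Wp k a b)^2).
Definition negG Wp : Params := fun k a b => - G Wp k a b.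

Lemma gsq_nonneg Wp : 0 <= gsq Wp.
Proof. apply coordSum_nonneg; intros; apply pow2_ge_0. Qed.

Lemma blk_le (D : Params) k : (1 <= k <= L)%nat -> frob d D k <= sqrt (coordSum d L (fun k a b => (D k a b)^2)).
Proof.
  intros Hk. unfold frob. apply sqrt_le_1_alt. unfold coordSum.
  destruct k as [|k']; [lia|]. replace (S k' - 1)%nat with k' by lia.
  apply (sumR_ge_term L (fun k => sumR (d (S k)) (fun a => sumR (d k) (fun b => D (S k) a b ^ 2)))); [|lia].
  intros; repeat (apply sumR_nonneg; intros); apply pow2_ge_0.
Qed.

Lemma frob_negG Wp k : frob d (negG Wp) k = frob d (G Wp) k.
Proof. unfold frob, negG. f_equal. apply sumR_ext; intros; apply sumR_ext; intros; ring. Qed.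

Lemma frob_padd Wp D s k : 0 <= s -> frob d (padd Wp D s) k <= frob d Wp k + s * frob d D k.
Proof.
  intros Hs. rewrite !frob_dnrm. unfold padd.
  eapply Rle_trans. apply (dnrm_triang _ _ (Wp k) (fun a b => s * D k a b)). rewrite dnrm_scal, Rabs_pos_eq by auto. lra.
Qed.

Lemma VD_entry_bound Wp D R del i : (i < n)%nat -> 1 <= R -> 0 <= del ->
  (forall k, (1 <= k <= L)%nat -> frob d Wp k <= R) -> (forall k, (1 <= k <= L)%nat -> frob d D k <= del) ->
  R * Rabs (VD d Wp D (zz i) L 0%nat) <= INR L * R^L * del /\
  R^2 * Rabs (VDD d Wp D (zz i) L 0%nat) <= (INR L)^2 * R^L * del^2 /\
  Rabs (AA Wp i) <= R^L.
Proof.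
  intros Hi HR Hdel H1 H2. destruct (V_bounds d Wp D (zz i) R del L HR Hdel H1 H2 L (le_n _)) as [B1 [B2 B3]].
  assert (Hz := zz_nrm i Hi). assert (Hz0 := nrm_nonneg (d 0%nat) (zz i)).
  assert (E1 := nrm_entry (d L) (VD d Wp D (zz i) L) 0 ltac:(rewrite HdL; lia)).
  assert (E2 := nrm_entry (d L) (VDD d Wp D (zz i) L) 0 ltac:(rewrite HdL; lia)).
  assert (E3 := nrm_entry (d L) (V d Wp (zz i) L) 0 ltac:(rewrite HdL; lia)).
  assert (0 <= R^L) by (apply pow_le; lra). assert (0 <= INR L) by apply pos_INR.
  assert (0 <= INR L * R^L * del) by (repeat apply Rmult_le_pos; lra).
  assert (0 <= (INR L)^2 * R^L * del^2) by (repeat apply Rmult_le_pos; try apply pow2_ge_0; lra).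
  split; [|split].
  - eapply Rle_trans. apply Rmult_le_compat_l. lra. apply E1. eapply Rle_trans. apply B2. rewrite <- (Rmult_1_r (INR L * R^L * del)) at 2. apply Rmult_le_compat_l; auto.
  - eapply Rle_trans. apply Rmult_le_compat_l. nra. apply E2. eapply Rle_trans. apply B3. rewrite <- (Rmult_1_r ((INR L)^2 * R^L * del^2)) at 2. apply Rmult_le_compat_l; auto.
  - unfold AA. eapply Rle_trans. apply E3. eapply Rle_trans. apply B1. rewrite <- (Rmult_1_r (R^L)) at 2. apply Rmult_le_compat_l; auto.
Qed.

Lemma gsq_dir Wp : gsq Wp = / INR n * sumR n (fun i => l' (AA Wp i) * VD d Wp (G Wp) (zz i) L 0%nat).
Proof. rewrite dirder. unfold gsq. apply coordSum_ext; intros; ring. Qed.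

Lemma grad_bound Wp R : 1 <= R -> (forall k, (1 <= k <= L)%nat -> frob d Wp k <= R) ->
  sqrt (gsq Wp) * R <= Gb * INR L * R^L.
Proof.
  intros HR HW. set (del := sqrt (gsq Wp)). assert (Hdel : 0 <= del) by apply sqrt_pos.
  assert (Hsq : del^2 = gsq Wp) by (apply pow2_sqrt; apply gsq_nonneg).
  assert (HG2 : forall k, (1 <= k <= L)%nat -> frob d (G Wp) k <= del) by (intros; apply blk_le; auto).
  assert (HGb := Gb_pos). assert (0 <= R^L) by (apply pow_le; lra). assert (0 <= INR L) by apply pos_INR.
  assert (Hb : Rabs (gsq Wp) <= Gb * (INR L * R^L * del) / R).
  { rewrite gsq_dir. apply avg_bound. apply Rmult_le_pos. repeat apply Rmult_le_pos; lra. left; apply Rinv_0_lt_compat; lra.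
    intros i Hi. destruct (VD_entry_bound Wp (G Wp) R del i Hi HR Hdel HW HG2) as [B _].
    rewrite Rabs_mult. unfold Rdiv. apply Rmult_le_reg_l with R. lra.
    replace (R * (Gb * (INR L * R ^ L * del) * / R)) with (Gb * (INR L * R ^ L * del)) by (field; lra).
    replace (R * (Rabs (l' (AA Wp i)) * Rabs (VD d Wp (G Wp) (zz i) L 0))) with (Rabs (l' (AA Wp i)) * (R * Rabs (VD d Wp (G Wp) (zz i) L 0))) by ring.
    apply Rmult_le_compat; auto using Rabs_pos. apply Rmult_le_pos; [lra|apply Rabs_pos]. }
  rewrite Rabs_pos_eq in Hb by apply gsq_nonneg. rewrite <- Hsq in Hb.
  destruct (Req_dec del 0). rewrite H1. rewrite Rmult_0_l. repeat apply Rmult_le_pos; lra.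
  apply Rmult_le_reg_l with del. lra. apply Rmult_le_reg_r with (/ R). apply Rinv_0_lt_compat; lra.
  replace (del * (del * R) * / R) with (del^2) by (field; lra). 
  replace (del * (Gb * INR L * R ^ L) * / R) with (Gb * (INR L * R ^ L * del) / R) by (field; lra). auto.
Qed.

Lemma del_le_betaR Wp R : 1 <= R -> (forall k, (1 <= k <= L)%nat -> frob d Wp k <= R) ->
  sqrt (gsq Wp) <= betaR L beta Gb R.
Proof.
  intros HR HW. assert (H := grad_bound Wp R HR HW). assert (HB := betaR_R2 L beta Gb R HL).
  assert (Hb := beta_nonneg). assert (HGb := Gb_pos).
  assert (HL1 : 1 <= INR L) by (apply (le_INR 1); auto).
  assert (HRL : R^(S L) <= R^(2*L)) by (apply Rle_pow; auto; lia).
  assert (0 <= R^(S L)) by (apply pow_le; lra).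
  apply Rmult_le_reg_r with (R^2). nra. rewrite HB.
  replace (sqrt (gsq Wp) * R^2) with ((sqrt (gsq Wp) * R) * R) by ring.
  eapply Rle_trans. apply Rmult_le_compat_r. lra. apply H.
  replace (Gb * INR L * R ^ L * R) with (Gb * INR L * R ^ (S L)) by (simpl; ring).
  assert (HLL : INR L * Gb <= INR L^2 * Gb) by (apply Rmult_le_compat_r; nra).
  assert (0 <= INR L ^2 * beta) by (apply Rmult_le_pos; nra).
  assert (Gb * INR L <= 2 * INR L ^ 2 * (beta + Gb)) by nra.
  replace (2 * INR L ^ 2 * R ^ (2 * L) * (beta + Gb)) with ((2 * INR L ^ 2 * (beta + Gb)) * R^(2*L)) by ring.
  apply Rmult_le_compat; auto. nra.
Qed.
Lemma betaR_pos R : 1 <= R -> 0 < betaR L beta Gb R.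
Proof.
  intros HR. assert (H := betaR_R2 L beta Gb R HL). assert (Hb := beta_nonneg). assert (HGb := Gb_pos).
  assert (HL1 : 1 <= INR L) by (apply (le_INR 1); auto). assert (1 <= R^(2*L)) by (apply pow_R1_Rle; auto).
  assert (0 < R^2) by nra. assert (0 < 2 * INR L ^ 2 * R ^ (2 * L) * (beta + Gb)).
  { apply Rmult_lt_0_compat; [|lra]. apply Rmult_lt_0_compat; [|lra]. nra. }
  rewrite <- H in H2. destruct (Rlt_or_le 0 (betaR L beta Gb R)); auto. nra.
Qed.

Lemma term_bound (a0 ac ac1 p0 pc pc1 q2 c R del bR : R) :
  0 < c -> 1 <= R -> 0 <= del ->
  ac - a0 = pc1 * c -> pc - p0 = q2 * c ->
  R * Rabs pc <= INR L * R^L * del -> R * Rabs pc1 <= INR L * R^L * del ->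
  R^2 * Rabs q2 <= (INR L)^2 * R^L * del^2 ->
  bR * R^2 = 2 * INR L ^ 2 * R^(2*L) * (beta + Gb) ->
  Rabs (l' ac * pc - l' a0 * p0) <= c * del^2 * bR / 2.
Proof.
  intros Hc HR Hdel E1 E2 B1 B2 B3 HB.
  assert (Hb := beta_nonneg). assert (HGb := Gb_pos). assert (HR2 : 0 < R^2) by nra.
  assert (HRL : R^L <= R^(2*L)) by (apply Rle_pow; auto; lia).
  assert (HRL0 : 0 <= R^L) by (apply pow_le; lra).
  assert (HL0 : 0 <= INR L) by apply pos_INR.
  replace (l' ac * pc - l' a0 * p0) with ((l' ac - l' a0) * pc + l' a0 * (pc - p0)) by ring.
  eapply Rle_trans. apply Rabs_triang. rewrite !Rabs_mult.
  assert (T1 : Rabs (l' ac - l' a0) <= beta * (c * Rabs pc1)).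
  { eapply Rle_trans. apply Hlip. rewrite E1, Rabs_mult, (Rabs_pos_eq c) by lra. right; ring. }
  rewrite E2, Rabs_mult, (Rabs_pos_eq c) by lra.
  assert (Hlb := Hbnd a0).
  apply Rmult_le_reg_l with (R^2); auto.
  assert (S1 : R^2 * (Rabs (l' ac - l' a0) * Rabs pc) <= beta * c * (INR L * R^L * del)^2).
  { eapply Rle_trans. apply Rmult_le_compat_l. lra. apply Rmult_le_compat_r. apply Rabs_pos. apply T1.
    replace (R ^ 2 * (beta * (c * Rabs pc1) * Rabs pc)) with (beta * c * ((R * Rabs pc1) * (R * Rabs pc))) by ring.
    apply Rmult_le_compat_l. nra. replace ((INR L * R ^ L * del) ^ 2) with ((INR L * R^L*del) * (INR L * R^L * del)) by ring.
    apply Rmult_le_compat; try (apply Rmult_le_pos; [lra|apply Rabs_pos]); auto. }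
  assert (S2 : R^2 * (Rabs (l' a0) * (Rabs q2 * c)) <= Gb * c * ((INR L)^2 * R^L * del^2)).
  { replace (R^2 * (Rabs (l' a0) * (Rabs q2 * c))) with (Rabs (l' a0) * c * (R^2 * Rabs q2)) by ring.
    apply Rmult_le_compat; try (apply Rmult_le_pos; try apply Rabs_pos; try lra); auto; try nra. }
  rewrite Rmult_plus_distr_l. eapply Rle_trans. apply Rplus_le_compat. apply S1. apply S2.
  replace (R ^ 2 * (c * del ^ 2 * bR / 2)) with (c * del^2 * (bR * R^2) / 2) by field.
  rewrite HB.
  replace (beta * c * (INR L * R ^ L * del) ^ 2 + Gb * c * (INR L ^ 2 * R ^ L * del ^ 2)) with
    (c * del^2 * INR L^2 * (beta * (R^L * R^L) + Gb * R^L)) by ring.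
  replace (c * del ^ 2 * (2 * INR L ^ 2 * R ^ (2 * L) * (beta + Gb)) / 2) with (c * del^2 * INR L^2 * (beta * R^(2*L) + Gb * R^(2*L))) by field.
  apply Rmult_le_compat_l. apply Rmult_le_pos. apply Rmult_le_pos; nra. nra.
  replace (R^L * R^L) with (R^(2*L)) by (rewrite <- pow_add; f_equal; lia).
  assert (Gb * R^L <= Gb * R^(2*L)) by (apply Rmult_le_compat_l; lra). lra.
Qed.

Lemma descent_gen Wp R eta0 : 1 <= R -> (forall k, (1 <= k <= L)%nat -> frob d Wp k <= R - 1) ->
  0 < eta0 -> eta0 <= 1 / betaR L beta Gb R ->
  risk l n zz d L (padd Wp (negG Wp) eta0) <= risk l n zz d L Wp - eta0 * gsq Wp / 2.
Proof.
  intros HR HW Heta Hetab.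
  set (D := negG Wp). set (del := sqrt (gsq Wp)). set (bR := betaR L beta Gb R).
  assert (HbR : 0 < bR) by (apply betaR_pos; auto).
  assert (HB2 : bR * R^2 = 2 * INR L ^ 2 * R^(2*L) * (beta + Gb)) by (apply betaR_R2; auto).
  assert (Hdel : 0 <= del) by apply sqrt_pos.
  assert (Hsq : del^2 = gsq Wp) by (apply pow2_sqrt; apply gsq_nonneg).
  assert (HWR : forall k, (1 <= k <= L)%nat -> frob d Wp k <= R) by (intros k Hk; specialize (HW k Hk); lra).
  assert (Hdb : del <= bR) by (apply del_le_betaR; auto).
  assert (Hed : eta0 * del <= 1).
  { apply Rle_trans with ((1/bR) * bR). apply Rmult_le_compat; try lra. apply Hetab. right; field; lra. }
  assert (Heb : eta0 * bR <= 1).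
  { apply Rle_trans with ((1/bR) * bR). apply Rmult_le_compat_r; try lra. apply Hetab. right; field; lra. }
  assert (HD : forall k, (1 <= k <= L)%nat -> frob d D k <= del) by (intros; unfold D; rewrite frob_negG; apply blk_le; auto).
  assert (Hseg : forall s, 0 <= s <= eta0 -> forall k, (1 <= k <= L)%nat -> frob d (padd Wp D s) k <= R).
  { intros s Hs k Hk. eapply Rle_trans. apply frob_padd. lra. specialize (HW k Hk). specialize (HD k Hk).
    assert (s * frob d D k <= eta0 * del) by (apply Rmult_le_compat; try lra; apply frob_nonneg). lra. }
  set (phid := fun s => / INR n * sumR n (fun i => l' (AA (padd Wp D s) i) * VD d (padd Wp D s) D (zz i) L 0%nat)).
  destruct (MVT_cor2 (fun s => risk l n zz d L (padd Wp D s)) phid 0 eta0 Heta) as [c [Hc Hcr]].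
  { intros c _. apply dphi. }
  assert (Hp0 : phid 0 = - gsq Wp).
  { unfold phid. rewrite padd0, dirder. unfold gsq. transitivity (coordSum d L (fun k a b => -1 * (G Wp k a b)^2)).
    apply coordSum_ext; intros; unfold D, negG; ring. rewrite coordSum_scal; ring. }
  assert (Hdiff : Rabs (phid c - phid 0) <= c * del^2 * bR / 2).
  { unfold phid. rewrite <- Rmult_minus_distr_l, <- sumR_minus. apply avg_bound.
    { unfold Rdiv. apply Rmult_le_pos; [|lra]. apply Rmult_le_pos; [|lra]. apply Rmult_le_pos; [lra|apply pow2_ge_0]. }
    intros i Hi.
    destruct (MVT_cor2 (fun s => V d (padd Wp D s) (zz i) L 0%nat) (fun s => VD d (padd Wp D s) D (zz i) L 0%nat) 0 c ltac:(lra)) as [c1 [E1 Hc1]].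
    { intros; apply dV. }
    destruct (MVT_cor2 (fun s => VD d (padd Wp D s) D (zz i) L 0%nat) (fun s => VDD d (padd Wp D s) D (zz i) L 0%nat) 0 c ltac:(lra)) as [c2 [E2 Hc2]].
    { intros; apply dVD. }
    destruct (VD_entry_bound (padd Wp D c) D R del i Hi HR Hdel (Hseg c ltac:(lra)) HD) as [Bc _].
    destruct (VD_entry_bound (padd Wp D c1) D R del i Hi HR Hdel (Hseg c1 ltac:(lra)) HD) as [Bc1 _].
    destruct (VD_entry_bound (padd Wp D c2) D R del i Hi HR Hdel (Hseg c2 ltac:(lra)) HD) as [_ [Bc2 _]].
    apply (term_bound _ _ 0 _ _ (VD d (padd Wp D c1) D (zz i) L 0%nat) (VDD d (padd Wp D c2) D (zz i) L 0%nat) c R del bR); auto; try lra.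
    all: try (unfold AA; rewrite E1; ring).
    all: try (rewrite E2; ring). }
  assert (Hpc : phid c <= - del^2 / 2).
  { assert (H1 : phid c <= phid 0 + c * del^2 * bR / 2) by (apply Rabs_le_between' in Hdiff || idtac; destruct (Rabs_def2b _ _ Hdiff) || idtac; apply Rabs_le in Hdiff || idtac; unfold Rabs in Hdiff; destruct (Rcase_abs (phid c - phid 0)); lra).
    rewrite Hp0, <- Hsq in H1.
    assert (c * bR <= 1) by (apply Rle_trans with (eta0 * bR); [apply Rmult_le_compat_r; lra|auto]).
    assert (0 <= del^2) by apply pow2_ge_0.
    assert (c * del^2 * bR <= del^2) by nra. lra. }
  rewrite padd0 in Hc. rewrite <- Hsq.
  assert (phid c * (eta0 - 0) <= - del^2 / 2 * eta0) by (rewrite Rminus_0_r; apply Rmult_le_compat_r; lra).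
  lra.
Qed.
Lemma l_decr a b : a < b -> l b < l a.
Proof.
  intros Hab. destruct (MVT_cor2 l l' a b Hab) as [c [E _]]. intros; apply Hl_der.
  assert (H := Hl'_neg c). assert (l' c * (b - a) < 0) by (apply Rmult_neg_pos; lra). lra.
Qed.

Lemma l_nonneg s : 0 <= l s.
Proof.
  destruct (Rle_or_lt 0 (l s)); auto. destruct (Hl_pinf (- l s) ltac:(lra)) as [A HA].
  set (t := Rmax A (s + 1)). assert (A <= t) by apply Rmax_l. assert (s + 1 <= t) by apply Rmax_r.
  specialize (HA t H0). assert (l t < l s) by (apply l_decr; lra). rewrite Rabs_left in HA by lra. lra.
Qed.

Lemma risk_nonneg Wp : 0 <= risk l n zz d L Wp.
Proof.
  rewrite risk_eq. apply Rmult_le_pos. destruct n. simpl. rewrite Rinv_0; lra. left; apply Rinv_0_lt_compat, lt_0_INR; lia.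
  apply sumR_nonneg; intros; apply l_nonneg.
Qed.

Lemma sumR_const m r : sumR m (fun _ => r) = INR m * r.
Proof. induction m. simpl; ring. rewrite S_INR. simpl. rewrite IHm. ring. Qed.

Lemma avg_le m f r : (0 < m)%nat -> (forall i, (i < m)%nat -> f i <= r) -> / INR m * sumR m f <= r.
Proof.
  intros Hm H. assert (HP : 0 < INR m) by (apply lt_0_INR; auto).
  apply Rmult_le_reg_l with (INR m); auto. rewrite <- Rmult_assoc, Rinv_r, Rmult_1_l by lra.
  rewrite <- sumR_const. apply sumR_le; auto.
Qed.

Lemma avg_gt m f r : (0 < m)%nat -> (forall i, (i < m)%nat -> r < f i) -> r < / INR m * sumR m f.
Proof.
  intros Hm H. assert (HP : 0 < INR m) by (apply lt_0_INR; auto).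
  apply Rmult_lt_reg_l with (INR m); auto. rewrite <- Rmult_assoc, Rinv_r, Rmult_1_l by lra.
  rewrite <- sumR_const. destruct m; [lia|]. simpl. clear Hm HP.
  assert (sumR m (fun _ => r) <= sumR m f) by (apply sumR_le; intros; left; apply H; lia).
  specialize (H m ltac:(lia)). lra.
Qed.

Lemma fin_min m f : (forall i, (i < m)%nat -> 0 < f i) -> exists g, 0 < g /\ forall i, (i < m)%nat -> g <= f i.
Proof.
  induction m; intros H. exists 1; split; [lra|intros; lia].
  destruct IHm as [g [Hg Hg2]]; [intros; apply H; lia|].
  exists (Rmin g (f m)). split. apply Rmin_glb_lt; [auto|apply H; lia].
  intros i Hi. destruct (Nat.eq_dec i m). subst; apply Rmin_r. eapply Rle_trans. apply Rmin_l. apply Hg2; lia.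
Qed.

Lemma coordSum_CS m F H : (coordSum d m (fun k a b => F k a b * H k a b))^2 <= coordSum d m (fun k a b => (F k a b)^2) * coordSum d m (fun k a b => (H k a b)^2).
Proof.
  cut (coordSum d m (fun k a b => F k a b * H k a b) * coordSum d m (fun k a b => F k a b * H k a b) <= coordSum d m (fun k a b => H k a b ^ 2) * coordSum d m (fun k a b => F k a b ^ 2)). intros; nra.
  apply quad_disc. apply coordSum_nonneg; intros; apply pow2_ge_0.
  intros t. replace (coordSum d m (fun k a b => H k a b ^ 2) * t * t - 2 * coordSum d m (fun k a b => F k a b * H k a b) * t + coordSum d m (fun k a b => F k a b ^ 2)) with (coordSum d m (fun k a b => (F k a b - t * H k a b)^2)).
  apply coordSum_nonneg; intros; apply pow2_ge_0.
  transitivity (coordSum d m (fun k a b => (t*t) * (H k a b)^2) + coordSum d m (fun k a b => (-2*t) * (F k a b * H k a b)) + coordSum d m (fun k a b => (F k a b)^2)).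
  rewrite <- !coordSum_plus. unfold coordSum. apply sumR_ext; intros; apply sumR_ext; intros; apply sumR_ext; intros; ring.
  rewrite !coordSum_scal. ring.
Qed.

(* direction used in the gradient lower bound *)
Definition Edir (Wp : Params) (u w : nat -> R) : Params := fun k a b =>
  if Nat.eqb k 1 then sumR (d 0%nat) (fun j => Wp 1%nat a j * w j) * u b else 0.

Lemma VD_Edir Wp u w v m a : (1 <= m)%nat ->
  VD d Wp (Edir Wp u w) v m a = inner (d 0%nat) u v * V d Wp w m a.
Proof.
  revert a. induction m; intros a Hm; [lia|]. destruct m.
  - simpl. unfold Edir, inner. simpl. rewrite <- sumR_scalr.
    apply sumR_ext; intros; ring.
  - change (VD d Wp (Edir Wp u w) v (S (S m)) a) with (sumR (d (S m)) (fun l => Edir Wp u w (S (S m)) a l * V d Wp v (S m) l + Wp (S (S m)) a l * VD d Wp (Edir Wp u w) v (S m) l)).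
    change (V d Wp w (S (S m)) a) with (sumR (d (S m)) (fun l => Wp (S (S m)) a l * V d Wp w (S m) l)).
    rewrite <- sumR_scal. apply sumR_ext; intros j _. rewrite IHm by lia. unfold Edir. simpl. ring.
Qed.

Lemma coordSum_Edir Wp u w : coordSum d L (fun k a b => (Edir Wp u w k a b)^2) =
  nrm (d 1%nat) (V d Wp w 1%nat) ^2 * nrm (d 0%nat) u ^2.
Proof.
  unfold coordSum. rewrite (sumR_single L 0) by (lia || (intros k Hk Hk0; apply sumR_zero; intros; apply sumR_zero; intros; unfold Edir; destruct (Nat.eqb_spec (S k) 1); [lia|]; ring)).
  rewrite !nrm_sq. rewrite <- sumR_scalr. apply sumR_ext; intros a _. rewrite <- sumR_scal. apply sumR_ext; intros b _.
  unfold Edir. simpl. ring.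
Qed.

Lemma glb Rb r1 : (0 < n)%nat -> 1 <= Rb -> r1 < l 0 ->
  exists c, 0 < c /\ forall Wp, (forall k, (1 <= k <= L)%nat -> frob d Wp k <= Rb) ->
     risk l n zz d L Wp <= r1 -> c <= gsq Wp.
Proof.
  intros Hn HRb Hr1. destruct Hsep as [u Hu].
  destruct (fin_min n (fun i => inner (d 0%nat) u (zz i)) Hu) as [gam [Hgam Hgam2]].
  set (M := Rb^L). assert (HM : 1 <= M) by (apply pow_R1_Rle; auto).
  destruct (continuity_ab_min (fun s => - l' s) (-M) M ltac:(lra)) as [mx [Hmx _]].
  { intros c _. apply continuity_pt_opp. apply Hl'_cont. }
  set (m0 := - l' mx). assert (Hm0 : 0 < m0) by (unfold m0; specialize (Hl'_neg mx); lra).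
  assert (HGb := Gb_pos).
  set (a0 := (l 0 - r1) / (2 * Gb)). assert (Ha0 : 0 < a0) by (unfold a0; apply Rdiv_lt_0_compat; lra).
  assert (Hla0 : r1 < l a0).
  { destruct (MVT_cor2 l l' 0 a0 Ha0) as [c [E _]]. intros; apply Hl_der.
    assert (Hc := Hbnd c). assert (- Gb <= l' c) by (apply Rabs_le_between' in Hc || idtac; unfold Rabs in Hc; destruct (Rcase_abs (l' c)); lra).
    assert (l' c * (a0 - 0) >= - Gb * a0) by nra. assert (Gb * a0 = (l 0 - r1)/2) by (unfold a0; field; lra). lra. }
  set (nu := nrm (d 0%nat) u).
  assert (Hnu : 0 < nu).
  { assert (H := Hu 0%nat Hn). assert (H2 : Rabs (inner (d 0%nat) u (fun j => y 0%nat * x 0%nat j)) <= nu * nrm (d 0%nat) (zz 0%nat)) by apply sumR_CS_abs.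
    assert (0 <= nrm (d 0%nat) (zz 0%nat)) by apply nrm_nonneg. assert (0 <= nu) by apply nrm_nonneg.
    rewrite Rabs_pos_eq in H2 by lra. destruct (Req_dec nu 0); [|lra].
    rewrite H3 in H2. lra. }
  exists ((m0 * gam * a0)^2 / (Rb^2 * nu^2)). split.
  { apply Rdiv_lt_0_compat. apply pow_lt. apply Rmult_lt_0_compat; [apply Rmult_lt_0_compat|]; auto. apply Rmult_lt_0_compat; apply pow_lt; lra. }
  intros Wp HW Hrisk.
  assert (Hex : exists i, (i < n)%nat /\ l (AA Wp i) <= r1).
  { destruct (classic (exists i, (i < n)%nat /\ l (AA Wp i) <= r1)) as [H|H]; auto.
    exfalso. assert (r1 < risk l n zz d L Wp); [|lra]. rewrite risk_eq. apply avg_gt; auto.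
    intros i Hi. destruct (Rlt_or_le r1 (l (AA Wp i))); auto. exfalso; apply H; exists i; auto. }
  destruct Hex as [i0 [Hi0 Hli0]].
  assert (HA0 : a0 <= AA Wp i0).
  { destruct (Rle_or_lt a0 (AA Wp i0)); auto. assert (l a0 < l (AA Wp i0)) by (apply l_decr; auto). lra. }
  set (w := fun j => prodMat d Wp L 0%nat j).
  assert (HAw : forall i, (i < n)%nat -> AA Wp i = sumR (d 0%nat) (fun j => w j * zz i j)).
  { intros i Hi. unfold AA, w. rewrite <- prod_V by (rewrite HdL; lia). reflexivity. }
  set (nw := nrm (d 0%nat) w). assert (Hnw0 : 0 <= nw) by apply nrm_nonneg.
  assert (Hnw : a0 <= nw).
  { rewrite HAw in HA0 by auto. eapply Rle_trans. apply HA0. eapply Rle_trans. apply Rle_abs.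
    eapply Rle_trans. apply sumR_CS_abs. fold nw. assert (H := zz_nrm i0 Hi0). assert (0 <= nrm (d 0%nat) (zz i0)) by apply nrm_nonneg. nra. }
  set (E := Edir Wp u w).
  assert (HVw : V d Wp w L 0%nat = nw^2).
  { unfold nw. rewrite nrm_sq. rewrite <- prod_V by (rewrite HdL; lia). apply sumR_ext; intros; unfold w; ring. }
  assert (HDir := dirder Wp E).
  assert (HleDir : / INR n * sumR n (fun i => l' (AA Wp i) * VD d Wp E (zz i) L 0%nat) <= - (m0 * gam) * nw^2).
  { apply avg_le; auto. intros i Hi. unfold E. rewrite VD_Edir by auto. rewrite HVw.
    destruct (VD_entry_bound Wp Wp Rb Rb i Hi HRb ltac:(lra) HW HW) as [_ [_ HAi]].
    assert (Hmi : m0 <= - l' (AA Wp i)) by (apply Hmx; apply Rabs_le_between' in HAi || idtac; unfold Rabs in HAi; destruct (Rcase_abs (AA Wp i)); fold M in HAi; lra).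
    assert (Hgi := Hgam2 i Hi). assert (0 <= nw^2) by apply pow2_ge_0.
    assert (l' (AA Wp i) * inner (d 0%nat) u (zz i) <= - (m0 * gam)).
    { assert (0 < inner (d 0%nat) u (zz i)) by lra.
      assert (l' (AA Wp i) * inner (d 0%nat) u (zz i) <= - m0 * inner (d 0%nat) u (zz i)) by (apply Rmult_le_compat_r; lra).
      assert (m0 * gam <= m0 * inner (d 0%nat) u (zz i)) by (apply Rmult_le_compat_l; lra). lra. }
    replace (l' (AA Wp i) * (inner (d 0%nat) u (zz i) * nw ^ 2)) with ((l' (AA Wp i) * inner (d 0%nat) u (zz i)) * nw^2) by ring.
    apply Rmult_le_compat_r; auto. }
  rewrite HDir in HleDir.
  assert (HCS := coordSum_CS L E (G Wp)). fold (gsq Wp) in HCS. unfold E in HCS. rewrite coordSum_Edir in HCS.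
  assert (HV1 : nrm (d 1%nat) (V d Wp w 1%nat) <= Rb * nw).
  { eapply Rle_trans. apply matvec. rewrite <- frob_S. apply Rmult_le_compat_r; auto; apply HW; lia. }
  assert (HV0 : 0 <= nrm (d 1%nat) (V d Wp w 1%nat)) by apply nrm_nonneg.
  fold nu in HCS. fold E in HCS.
  assert (Hg0 := gsq_nonneg Wp).
  assert (Hmg : 0 < m0 * gam) by (apply Rmult_lt_0_compat; auto).
  assert (Hnwp : 0 < nw) by lra.
  assert (K1 : (m0 * gam * nw^2)^2 <= (Rb * nw)^2 * nu^2 * gsq Wp).
  { eapply Rle_trans. 2:{ eapply Rle_trans. 2:{ apply Rmult_le_compat_r. apply Hg0. apply Rmult_le_compat_r. apply pow2_ge_0. apply pow_incr. split. apply HV0. apply HV1. } apply HCS. }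
    assert (0 <= m0 * gam * nw^2) by (apply Rmult_le_pos; [lra|apply pow2_ge_0]).
    assert (HX : coordSum d L (fun k a b => E k a b * G Wp k a b) <= - (m0 * gam * nw^2)) by lra. nra. }
  assert (K2 : (m0 * gam)^2 * nw^2 <= Rb^2 * nu^2 * gsq Wp).
  { apply Rmult_le_reg_r with (nw^2). apply pow_lt; auto.
    replace ((m0 * gam)^2 * nw^2 * nw^2) with ((m0 * gam * nw^2)^2) by ring.
    replace (Rb ^ 2 * nu ^ 2 * gsq Wp * nw ^ 2) with ((Rb * nw)^2 * nu^2 * gsq Wp) by ring. auto. }
  assert (K3 : (m0 * gam * a0)^2 <= (m0 * gam)^2 * nw^2).
  { replace ((m0 * gam * a0)^2) with ((m0*gam)^2 * a0^2) by ring. apply Rmult_le_compat_l. apply pow2_ge_0. apply pow_incr; lra. }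
  assert (HD : 0 < Rb^2 * nu^2) by (apply Rmult_lt_0_compat; apply pow_lt; lra).
  unfold Rdiv. apply Rmult_le_reg_r with (Rb^2 * nu^2); auto. rewrite Rmult_assoc, Rinv_l, Rmult_1_r by lra.
  rewrite Rmult_comm. lra.
Qed.
Variables (W : nat -> Params) (Rad : nat -> R).
Hypothesis (HGD : forall t k i j, W (S t) k i j = W t k i j - stepsize L beta Gb Rad t * G (W t) k i j).
Hypothesis (HRad : forall t, inBall d L (Rad t - 1) (W t)).
Hypothesis (HRad_step : forall t, inBall d L (Rad t - 1) (W (S t)) -> Rad (S t) = Rad t).
Hypothesis (HA2_grad : exists k i j, (1 <= k <= L)%nat /\ (i < d k)%nat /\ (j < d (k - 1))%nat /\ G (W 0%nat) k i j <> 0).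
Hypothesis (HA2_risk : risk l n (fun i j => y i * x i j) d L (W 0%nat) <= l 0).

Definition eta t := stepsize L beta Gb Rad t.

Lemma maxFrob_nonneg Wp : 0 <= maxFrob d Wp L.
Proof. destruct (maxFrob_props d Wp L HL) as [H _]. eapply Rle_trans. apply (frob_nonneg d Wp 1). apply H; lia. Qed.

Lemma frob_W t k : (1 <= k <= L)%nat -> frob d (W t) k <= Rad t - 1.
Proof. intros Hk. destruct (maxFrob_props d (W t) L HL) as [H _]. eapply Rle_trans. apply H; auto. apply HRad. Qed.

Lemma Rad_ge1 t : 1 <= Rad t.
Proof. assert (H := HRad t). unfold inBall in H. assert (H2 := maxFrob_nonneg (W t)). lra. Qed.

Lemma eta_props t : 0 < eta t /\ eta t <= 1 /\ eta t <= 1 / betaR L beta Gb (Rad t).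
Proof.
  unfold eta, stepsize. assert (H := betaR_pos (Rad t) (Rad_ge1 t)).
  split; [|split]. apply Rmin_glb_lt; [apply Rdiv_lt_0_compat|]; lra. apply Rmin_r. apply Rmin_l.
Qed.

Lemma W_step t : W (S t) = padd (W t) (negG (W t)) (eta t).
Proof. extensionality k; extensionality i; extensionality j. rewrite HGD. unfold padd, negG, eta. ring. Qed.

Lemma descent t : risk l n zz d L (W (S t)) <= risk l n zz d L (W t) - eta t * gsq (W t) / 2.
Proof.
  rewrite W_step. destruct (eta_props t) as [H1 [_ H3]].
  apply descent_gen with (R := Rad t); auto. apply Rad_ge1. intros; apply frob_W; auto.
Qed.

Lemma sum_bound N : sumR N (fun t => eta t * gsq (W t)) <= 2 * (risk l n zz d L (W 0%nat) - risk l n zz d L (W N)).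
Proof. induction N. simpl. lra. simpl. assert (H := descent N). lra. Qed.

Lemma sum_bound2 N : sumR N (fun t => eta t * gsq (W t)) <= 2 * l 0.
Proof. eapply Rle_trans. apply sum_bound. assert (H := risk_nonneg (W N)). change (risk l n zz d L (W 0%nat) <= l 0) in HA2_risk. lra. Qed.

Lemma coordSum_ge_term F k a b : (forall k a b, 0 <= F k a b) -> (1 <= k <= L)%nat -> (a < d k)%nat -> (b < d (k-1))%nat ->
  F k a b <= coordSum d L F.
Proof.
  intros HF Hk Ha Hb. unfold coordSum. destruct k as [|k']; [lia|]. replace (S k' - 1)%nat with k' in Hb by lia.
  eapply Rle_trans. 2:{ apply (sumR_ge_term L _ k'); [intros; repeat (apply sumR_nonneg; intros); auto|lia]. }
  eapply Rle_trans. 2:{ apply (sumR_ge_term _ _ a); [intros; repeat (apply sumR_nonneg; intros); auto|auto]. }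
  apply (sumR_ge_term _ (fun b => F (S k') a b) b); auto.
Qed.

Lemma n_pos : (0 < n)%nat.
Proof.
  destruct HA2_grad as [k [i [j [Hk [Hi [Hj HG0]]]]]]. destruct (Nat.eq_dec n 0) as [En|En]; [|lia].
  exfalso. apply HG0. rewrite (G_eq _ k i j) by auto. rewrite En. simpl. ring.
Qed.

Lemma gsq0_pos : 0 < gsq (W 0%nat).
Proof.
  destruct HA2_grad as [k [i [j [Hk [Hi [Hj HG0]]]]]].
  eapply Rlt_le_trans. 2:{ apply (coordSum_ge_term (fun k a b => (G (W 0%nat) k a b)^2) k i j); auto. intros; apply pow2_ge_0. }
  assert (H := Rsqr_pos_lt _ HG0). unfold Rsqr in H. simpl. lra.
Qed.

Definition r1 := risk l n zz d L (W 1%nat).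

Lemma r1_lt : r1 < l 0.
Proof.
  unfold r1. assert (H := descent 0). destruct (eta_props 0) as [H1 _]. assert (H2 := gsq0_pos).
  change (risk l n zz d L (W 0%nat) <= l 0) in HA2_risk. assert (0 < eta 0 * gsq (W 0%nat)) by (apply Rmult_lt_0_compat; auto). lra.
Qed.

Lemma risk_le_r1 t : (1 <= t)%nat -> risk l n zz d L (W t) <= r1.
Proof. induction t; intros Ht; [lia|]. destruct t. unfold r1; lra. assert (H := descent (S t)). assert (H2 := IHt ltac:(lia)).
  assert (0 <= eta (S t) * gsq (W (S t))) by (apply Rmult_le_pos; [left; apply eta_props|apply gsq_nonneg]). lra. Qed.

Lemma Rad_mono t : Rad t <= Rad (S t).
Proof.
  destruct (classic (inBall d L (Rad t - 1) (W (S t)))) as [H|H]. rewrite HRad_step; auto; lra.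
  unfold inBall in H. assert (H2 := HRad (S t)). unfold inBall in H2. lra.
Qed.

Lemma Rad_mono' t k : Rad t <= Rad (t + k).
Proof. induction k. rewrite Nat.add_0_r; lra. rewrite Nat.add_succ_r. eapply Rle_trans; [apply IHk|apply Rad_mono]. Qed.

Lemma block_le_max Wp k : (1 <= k <= L)%nat -> frob d Wp k <= maxFrob d Wp L.
Proof. intros Hk. destruct (maxFrob_props d Wp L HL) as [Hm _]. auto. Qed.

Lemma claim1 : forall M : R, exists t, M < maxFrob d (W t) L.
Proof.
  intros M. destruct (classic (exists t, M < maxFrob d (W t) L)) as [Hex|Hex]; auto. exfalso.
  assert (HM : forall t, maxFrob d (W t) L <= M) by (intros t; destruct (Rle_or_lt (maxFrob d (W t) L) M) as [Hle|Hlt]; auto; exfalso; apply Hex; exists t; auto).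
  assert (HRm : exists Rm, forall t, Rad t <= Rm).
  { destruct (classic (exists t0, M + 1 <= Rad t0)) as [[t0 Ht0]|Hno].
    - exists (Rad t0). assert (Hk : forall k, Rad (t0 + k) = Rad t0).
      { induction k. rewrite Nat.add_0_r; auto. rewrite Nat.add_succ_r. rewrite HRad_step. auto.
        unfold inBall. rewrite IHk. specialize (HM (S (t0 + k))). lra. }
      intros t. destruct (Nat.le_gt_cases t t0).
      + replace t0 with (t + (t0 - t))%nat by lia. apply Rad_mono'.
      + replace t with (t0 + (t - t0))%nat by lia. rewrite Hk. lra.
    - exists (M + 1). intros t. destruct (Rle_or_lt (Rad t) (M+1)); auto. exfalso; apply Hno; exists t; lra. }
  destruct HRm as [Rm HRm].
  assert (HRm1 : 1 <= Rm) by (eapply Rle_trans; [apply (Rad_ge1 0)|apply HRm]).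
  set (emin := Rmin (1 / betaR L beta Gb Rm) 1).
  assert (Hemin : 0 < emin) by (apply Rmin_glb_lt; [apply Rdiv_lt_0_compat; [lra|apply betaR_pos; auto]|lra]).
  assert (Heta : forall t, emin <= eta t).
  { intros t. unfold eta, stepsize, emin. apply Rle_min_compat_r. unfold Rdiv. rewrite !Rmult_1_l.
    apply Rinv_le_contravar. apply betaR_pos; apply Rad_ge1. unfold betaR.
    assert (Hb := beta_nonneg). assert (HGb := Gb_pos). assert (H1 := Rad_ge1 t).
    apply Rmult_le_compat_r. lra. apply Rmult_le_compat_l. apply Rmult_le_pos; [lra|apply pow2_ge_0]. apply pow_incr. split; [lra|auto]. }
  destruct (glb (Rmax M 1) r1 n_pos (Rmax_r _ _) r1_lt) as [c [Hc Hc2]].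
  assert (Hgt : forall t, (1 <= t)%nat -> c <= gsq (W t)).
  { intros t Ht. apply Hc2. intros k Hk. eapply Rle_trans. apply block_le_max; auto. eapply Rle_trans. apply HM. apply Rmax_l. apply risk_le_r1; auto. }
  assert (Hlow : forall N, INR N * (emin * c) <= sumR (S N) (fun t => eta t * gsq (W t))).
  { induction N. simpl. rewrite Rmult_0_l, Rplus_0_l. apply Rmult_le_pos; [left; apply eta_props|apply gsq_nonneg].
    rewrite S_INR. change (sumR (S (S N)) (fun t => eta t * gsq (W t))) with (sumR (S N) (fun t => eta t * gsq (W t)) + eta (S N) * gsq (W (S N))).
    assert (emin * c <= eta (S N) * gsq (W (S N))) by (apply Rmult_le_compat; try lra; [apply Heta|apply Hgt; lia]). lra. }
  destruct (INR_archimed (emin * c) (2 * l 0) ltac:(apply Rmult_lt_0_compat; auto)) as [N HN].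
  specialize (Hlow N). specialize (sum_bound2 (S N)). lra.
Qed.

Lemma frob_step t k : (1 <= k <= L)%nat -> frob d (W (S t)) k <= frob d (W t) k + eta t * sqrt (gsq (W t)).
Proof.
  intros Hk. rewrite W_step. eapply Rle_trans. apply frob_padd. left; apply eta_props.
  rewrite frob_negG. apply Rplus_le_compat_l. apply Rmult_le_compat_l. left; apply eta_props. apply blk_le; auto.
Qed.

Lemma claim3 : forall Rb : R, 0 < Rb -> exists s : R, Un_cv (fun N => sumR N (fun t =>
        match Rle_dec (maxFrob d (W t) L) Rb with
        | left _ => stepsize L beta Gb Rad t
        | right _ => 0
        end)) s.
Proof.
  intros Rb HRb. set (f := fun t => match Rle_dec (maxFrob d (W t) L) Rb with
        | left _ => stepsize L beta Gb Rad t | right _ => 0 end).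
  destruct (glb (Rmax Rb 1) r1 n_pos (Rmax_r _ _) r1_lt) as [c [Hc Hc2]].
  assert (Hf0 : forall t, 0 <= f t /\ f t <= 1).
  { intros t. unfold f. destruct (Rle_dec _ _); [|lra]. destruct (eta_props t) as [A [B _]]. unfold eta in *. lra. }
  assert (Hf : forall t, (1 <= t)%nat -> f t <= eta t * gsq (W t) / c).
  { intros t Ht. unfold f. destruct (Rle_dec _ _) as [Hin|Hout].
    - assert (c <= gsq (W t)). { apply Hc2. intros k Hk. eapply Rle_trans. apply block_le_max; auto. eapply Rle_trans. apply Hin. apply Rmax_l. apply risk_le_r1; auto. }
      destruct (eta_props t) as [A _]. unfold eta in *. apply Rmult_le_reg_r with c; auto. unfold Rdiv. rewrite Rmult_assoc, Rinv_l, Rmult_1_r by lra.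
      apply Rmult_le_compat_l; lra.
    - unfold Rdiv. apply Rmult_le_pos. apply Rmult_le_pos; [left; apply eta_props|apply gsq_nonneg]. left; apply Rinv_0_lt_compat; auto. }
  assert (Hub : forall N, sumR N f <= 1 + 2 * l 0 / c).
  { intros N. destruct N. simpl. assert (0 <= 2 * l 0 / c) by (unfold Rdiv; apply Rmult_le_pos; [assert (H := l_nonneg 0); lra|left; apply Rinv_0_lt_compat; auto]). lra.
    assert (HS : forall m, sumR (S m) f <= f 0%nat + sumR (S m) (fun t => eta t * gsq (W t)) / c).
    { induction m. simpl. assert (0 <= eta 0 * gsq (W 0%nat) / c).
      { unfold Rdiv. apply Rmult_le_pos. apply Rmult_le_pos; [left; apply eta_props|apply gsq_nonneg]. left; apply Rinv_0_lt_compat; auto. }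
      unfold Rdiv in *. lra.
      change (sumR (S (S m)) f) with (sumR (S m) f + f (S m)).
      change (sumR (S (S m)) (fun t => eta t * gsq (W t))) with (sumR (S m) (fun t => eta t * gsq (W t)) + eta (S m) * gsq (W (S m))).
      assert (H := Hf (S m) ltac:(lia)). unfold Rdiv in *. rewrite Rmult_plus_distr_r. lra. }
    eapply Rle_trans. apply HS. destruct (Hf0 0%nat) as [_ H1]. apply Rplus_le_compat; auto.
    unfold Rdiv. apply Rmult_le_compat_r. left; apply Rinv_0_lt_compat; auto. apply sum_bound2. }
  destruct (growing_cv (fun N => sumR N f)) as [s Hs].
  - intros N. simpl. destruct (Hf0 N). lra.
  - exists (1 + 2 * l 0 / c). intros r [N ->]. apply Hub.
  - exists s. exact Hs.
Qed.

Lemma claim2 : cv_infty (fun N => sumR N (stepsize L beta Gb Rad)).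
Proof.
  intros M. destruct (classic (exists N, M < sumR N (stepsize L beta Gb Rad))) as [[N HN]|Hno].
  - exists N. intros m Hm. replace m with (N + (m - N))%nat by lia. clear Hm. induction (m - N)%nat.
    rewrite Nat.add_0_r; auto. rewrite Nat.add_succ_r. simpl. destruct (eta_props (N + n0)%nat) as [A _]. unfold eta in A. lra.
  - exfalso.
    assert (HM : forall N, sumR N eta <= M) by (intros N; destruct (Rle_or_lt (sumR N eta) M); auto; exfalso; apply Hno; exists N; auto).
    assert (HM0 : 0 <= M) by (apply (HM 0%nat)).
    set (B := maxFrob d (W 0%nat) L + sqrt (M * (2 * l 0))).
    destruct (claim1 B) as [N HN].
    assert (HCS : forall N, sumR N (fun t => eta t * sqrt (gsq (W t))) <= sqrt (M * (2 * l 0))).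
    { intros N'. replace (sumR N' (fun t => eta t * sqrt (gsq (W t)))) with (sumR N' (fun t => sqrt (eta t) * (sqrt (eta t) * sqrt (gsq (W t))))).
      2:{ apply sumR_ext; intros. rewrite <- Rmult_assoc, sqrt_sqrt; auto. left; apply eta_props. }
      eapply Rle_trans; [apply Rle_abs|].
      apply sqrt_sq_le. apply sqrt_pos. rewrite pow2_sqrt.
      2:{ apply Rmult_le_pos; auto. assert (H := l_nonneg 0). lra. }
      eapply Rle_trans. apply sumR_CS. apply Rmult_le_compat. apply sumR_nonneg; intros; apply pow2_ge_0. apply sumR_nonneg; intros; apply pow2_ge_0.
      - eapply Rle_trans. 2: apply (HM N'). right. apply sumR_ext; intros. apply pow2_sqrt. left; apply eta_props.
      - eapply Rle_trans. 2: apply (sum_bound2 N'). right. apply sumR_ext; intros.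
        rewrite Rpow_mult_distr, !pow2_sqrt; auto. apply gsq_nonneg. left; apply eta_props. }
    assert (HF : forall k, (1 <= k <= L)%nat -> forall N, frob d (W N) k <= frob d (W 0%nat) k + sumR N (fun t => eta t * sqrt (gsq (W t)))).
    { intros k Hk N'. induction N'. simpl; lra. eapply Rle_trans. apply frob_step; auto. simpl. lra. }
    assert (maxFrob d (W N) L <= B).
    { destruct (maxFrob_props d (W N) L HL) as [_ H2]. apply H2. intros k Hk.
      eapply Rle_trans. apply HF; auto. unfold B. apply Rplus_le_compat. apply block_le_max; auto. apply HCS. }
    lra.
Qed.

Lemma main_sec :
  (forall M : R, exists t, M < maxFrob d (W t) L) /\
  cv_infty (fun N => sumR N (stepsize L beta Gb Rad)) /\
  (forall Rb : R, 0 < Rb ->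
     exists s : R, Un_cv (fun N => sumR N (fun t =>
        match Rle_dec (maxFrob d (W t) L) Rb with
        | left _ => stepsize L beta Gb Rad t
        | right _ => 0
        end)) s).
Proof. split; [apply claim1|split; [apply claim2|apply claim3]]. Qed.
End Main.

Theorem mainTheorem10
  (* data *)
  (n : nat) (d : nat -> nat) (L : nat)
  (x : nat -> nat -> R) (y : nat -> R)
  (Hy : forall i, (i < n)%nat -> y i = 1 \/ y i = -1)
  (Hx : forall i, (i < n)%nat ->
          sqrt (sumR (d 0%nat) (fun j => (x i j) ^ 2)) <= 1)
  (Hsep : exists u : nat -> R, forall i, (i < n)%nat ->
          0 < inner (d 0%nat) u (fun j => y i * x i j))
  (* network architecture *)
  (HL : (1 <= L)%nat) (HdL : d L = 1%nat)
  (* loss: Assumptions 1 and 4 *)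
  (l l' : R -> R) (beta Gb : R)
  (Hl_der : forall s, derivable_pt_lim l s (l' s))
  (Hl'_cont : continuity l')
  (Hl'_neg : forall s, l' s < 0)
  (Hl_minf : forall M, exists A, forall s, s <= A -> M <= l s)
  (Hl_pinf : forall eps, 0 < eps -> exists A, forall s, A <= s -> Rabs (l s) < eps)
  (Hlip : forall s r, Rabs (l' s - l' r) <= beta * Rabs (s - r))
  (Hbnd : forall s, Rabs (l' s) <= Gb)
  (* gradient of the risk *)
  (G : Params -> Params)
  (HG : is_gradient d L (risk l n (fun i j => y i * x i j) d L) G)
  (* gradient descent with the step sizes of Assumption 5 *)
  (W : nat -> Params) (Rad : nat -> R)
  (HGD : forall t k i j,
     W (S t) k i j = W t k i j - stepsize L beta Gb Rad t * G (W t) k i j)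
  (HRad : forall t, inBall d L (Rad t - 1) (W t))
  (HRad_step : forall t, inBall d L (Rad t - 1) (W (S t)) -> Rad (S t) = Rad t)
  (* Assumption 2 *)
  (HA2_grad : exists k i j, (1 <= k <= L)%nat /\ (i < d k)%nat /\
      (j < d (k - 1))%nat /\ G (W 0%nat) k i j <> 0)
  (HA2_risk : risk l n (fun i j => y i * x i j) d L (W 0%nat) <= l 0) :
  (* (i) max_k ||W_k(t)||_F is unbounded *)
  (forall M : R, exists t, M < maxFrob d (W t) L) /\
  (* (ii) sum_t eta_t = infinity *)
  cv_infty (fun N => sumR N (stepsize L beta Gb Rad)) /\
  (* (iii) for every R > 0, sum over {t : W(t) in B(R)} of eta_t is finite *)
  (forall Rb : R, 0 < Rb ->
     exists s : R, Un_cv (fun N => sumR N (fun t =>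
        match Rle_dec (maxFrob d (W t) L) Rb with
        | left _ => stepsize L beta Gb Rad t
        | right _ => 0
        end)) s).
Proof.
  eapply main_sec; eauto.
Qed.
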